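(* Let $n \geq 5$. For the game $\mathcal{G}^s_n$ defined in the context, the classical group broadcast complexity satisfies $B^{\mathrm{cl}}(\mathcal{G}^s_n) \geq \log_2 \log_2 n$, and the quantum group broadcast complexity with respect to the $n$-partite GHZ state $|\Phi\rangle = \frac{1}{\sqrt{2}}(|0\rangle^{\otimes n} + |1\rangle^{\otimes n}) \in \mathcal{H}_1\otimes\cdots\otimes\mathcal{H}_n$ (each $\mathcal{H}_i$ two-dimensional with orthonormal basis $\{|0\rangle,|1\rangle\}$) satisfies $B^{\mathrm{qm}}_{|\Phi\rangle}(\mathcal{G}^s_n) \leq 1$.
   Context: Write $[n]=\{1,\dots,n\}$ and let $\epsilon$ denote the empty string. A game $\mathcal{G}_n$ for $n$ players is a probability distribution over triples $(\sigma,q,W)$, where $\sigma=(G_1,\dots,G_m)$ is a tuple of disjoint sets with union $[n]$ (the groups), $q=(q_1,\dots,q_m)$ is an $m$-tuple of bitstrings (the query), and $W$ is a set of $m$-tuples of bitstrings (allowed answers). Players are arbitrary (possibly probabilistic) information-processing systems with an internal state, producing an output on each new input depending on all inputs so far and the internal state. In a classical strategy the players are classical and their initial internal states $R_1,\dots,R_n$ have an arbitrary joint distribution. In a quantum strategy based on an $n$-partite state $|\Psi\rangle \in \mathcal{H}_1\otimes\cdots\otimes\mathcal{H}_n$, player $P_i$ additionally holds the quantum system $\mathcal{H}_i$, initialized jointly in $|\Psi\rangle$ (plus possibly correlated classical initial data); inputs and outputs remain classical and may depend on outcomes of measurements on $\mathcal{H}_i$. Rules: an instance $(\sigma,q,W)$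 is sampled; player $P_i$ belongs to group $G_k$ if $i\in G_k$. The game proceeds in steps; in step 1 every player in $G_k$ receives $q_k$. In each step each player produces an output which is either sent to the players of his own group or broadcast to all $n$ players, and these outputs are inputs in the next step. If $b_{t,i}$ is the (possibly empty) string broadcast by $P_i$ in step $t$, all players receive $\bar b_t = b_{t,1}\|\cdots\|b_{t,n}$ in step $t+1$, and the strings $\bar b_t$ must be self-delimiting (a player reading $\bar b_t$ bitwise can detect where it ends). The game ends when all players are in a halting state, where at most one player of each group $G_k$ specifies a final output string $a_k$ ($a_k=\epsilon$ if none); the game is won if $(a_1,\dots,a_m)\in W$. The group broadcast complexity of a strategy $\tau$ is $B(\mathcal{G}_n,\tau)=\max\sum_t |\bar b_t|$, the maximum over all randomness of the players and initial states and over all instances of positive probability. $B^{\mathrm{cl}}(\mathcal{G}_n)$ is the minimum of $B(\mathcal{G}_n,\tau)$ over classical strategies $\tau$ winning $\mathcal{G}_n$ with certainty; $B^{\mathrm{qm}}_{|\Psi\rangle}(\mathcal{G}_n)$ is the minimum over quantum strategies based on $|\Psi\rangle$ winning with certainty. The game $\mathcal{G}^s_n$ is the uniform distribution over the triples $(\sigma_{ij}, q_s, W_s)$ for $1\le i<j\le n$, where $\sigma_{ij}=(\{i\},\{j\},[n]\setminus\{i,j\})$, $q_s=(0,0,1)$ and $W_s=\{(0,1,\epsilon),(1,0,\epsilon)\}$. *)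

(* Defs.v *)
From HB Require Import structures.
From mathcomp Require Import all_boot all_order all_algebra.
From mathcomp Require Import algC.
From mathcomp Require Import all_classical all_reals all_analysis.
From mathcomp Require Import Rstruct Rstruct_topology.

Unset Printing Implicit Defensive.

Import Order.TTheory GRing.Theory Num.Theory.

Local Open Scope classical_set_scope.

(* bitstrings; the empty string epsilon is [::] *)
Definition bits := seq bool.

(* An instance (sigma, q, W) for n players: the groups G_1..G_m are
   encoded by the map  group_of : [n] -> [m]  (G_k = group_of^-1 k, so
   they are disjoint with union [n]); q_k = query k; W = allowed. *)
Record instance (n : nat) := Instance {
  ngroups : nat;
  group_of : 'I_n -> 'I_ngroups;
  query : 'I_ngroups -> bits;
  allowed : ('I_ngroups -> bits) -> Prop }.
Arguments ngroups {n} _.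
Arguments group_of {n} _ _.
Arguments query {n} _ _.
Arguments allowed {n} _ _.

(* A game is a probability distribution over instances; everything in the
   definitions of B, B^cl, B^qm only depends on its support (instances of
   positive probability), which we record as an indexed family. *)
Record game (n : nat) := Game {
  gidx : Type;
  ginst : gidx -> instance n }.
Arguments gidx {n} _.
Arguments ginst {n} _ _.

Definition gs_group {n : nat} (i j : 'I_n) (p : 'I_n) : 'I_3 :=
  if p == i then @Ordinal 3 0 isT
  else if p == j then @Ordinal 3 1 isT else @Ordinal 3 2 isT.

Definition gs_query (k : 'I_3) : bits :=
  if val k == 2%N then [:: true] else [:: false].

Definition gs_allowed (a : 'I_3 -> bits) : Prop :=
  (a (@Ordinal 3 0 isT) = [:: false] /\ a (@Ordinal 3 1 isT) = [:: true]
     /\ a (@Ordinal 3 2 isT) = [::]) \/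
  (a (@Ordinal 3 0 isT) = [:: true] /\ a (@Ordinal 3 1 isT) = [:: false]
     /\ a (@Ordinal 3 2 isT) = [::]).

Definition gs_instance {n : nat} (i j : 'I_n) : instance n :=
  @Instance n 3 (gs_group i j) gs_query gs_allowed.

Definition game_s (n : nat) : game n :=
  @Game n {p : 'I_n * 'I_n | (p.1 < p.2)%N}
          (fun p => gs_instance (sval p).1 (sval p).2).

(* Output of a player in a step: halt (with optional final output a_k),
   or a string sent either to its own group (Send false s) or broadcast
   to all players (Send true s). *)
Inductive action := Halt of option bits | Send of bool & bits.

(* Input of a player in step t+1: the group messages of step t of the
   members of its group (with their sender), and bbar_t. *)
Definition inp (n : nat) := (seq ('I_n * bits) * bits)%type.

(* configuration: the inputs (after the query) received so far, and the
   status: None = running, Some o = halted with final output o *)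
Record cfg (n : nat) := Cfg { chist : 'I_n -> seq (inp n);
                    cstat : 'I_n -> option (option bits) }.
Arguments Cfg {n} _ _.
Arguments chist {n} _ _.
Arguments cstat {n} _ _.

Section Mechanics.
Context {n : nat}.
Variable (x : instance n).

Definition qry (p : 'I_n) : bits := query x (group_of x p).

(* a i = None iff player i has already halted *)
Definition bcast_part (a : 'I_n -> option action) (i : 'I_n) : bits :=
  if a i is Some (Send true s) then s else [::].

Definition bbar (a : 'I_n -> option action) : bits :=
  flatten [seq bcast_part a i | i <- enum 'I_n].

Definition gmsgs (a : 'I_n -> option action) (p : 'I_n) : seq ('I_n * bits) :=
  pmap (fun i => if group_of x i == group_of x p then
                   (if a i is Some (Send false s) then Some (i, s) else None)
                 else None) (enum 'I_n).


Definition cfg0 : cfg n := Cfg (fun _ => [::]) (fun _ => None).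

Definition cfg_next (c : cfg n) (a : 'I_n -> option action) : cfg n :=
  let st i := if a i is Some (Halt o) then Some o else cstat c i in
  Cfg (fun i => if st i is None then rcons (chist c i) (gmsgs a i, bbar a)
                else chist c i) st.

Definition terminated (c : cfg n) : Prop := forall i, cstat c i <> None.

Definition has_out (o : option (option bits)) : bool :=
  if o is Some (Some _) then true else false.

Definition group_output (c : cfg n) (k : 'I_(ngroups x)) : bits :=
  match [pick i | (group_of x i == k) && has_out (cstat c i)] with
  | Some i => if cstat c i is Some (Some s) then s else [::]
  | None => [::]
  end.

Definition won (c : cfg n) : Prop :=
  (forall i j, group_of x i = group_of x j ->
     has_out (cstat c i) -> has_out (cstat c j) -> i = j) /\
  allowed x (group_output c).

End Mechanics.

(* Omega: the (nonempty) support of the joint distribution of the initial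
   internal states R_1..R_n (player i sees only cs_init w i); a player's
   output in each step is a function of its initial state, its query and
   all inputs so far (local randomness is part of the initial state). *)
Record cstrat (n : nat) := CStrat {
  cs_Omega : Type;
  cs_omega0 : cs_Omega;
  cs_State : Type;
  cs_init : cs_Omega -> 'I_n -> cs_State;
  cs_act : 'I_n -> cs_State -> bits -> seq (inp n) -> action }.
Arguments cs_Omega {n} _.
Arguments cs_State {n} _.
Arguments cs_init {n} _ _ _.
Arguments cs_act {n} _ _ _ _ _.

Section Classical.
Context {n : nat}.
Variables (tau : cstrat n) (x : instance n) (w : cs_Omega tau).

Definition cacts (c : cfg n) : 'I_n -> option action := fun i =>
  if cstat c i is None
  then Some (cs_act tau i (cs_init tau w i) (qry x i) (chist c i)) else None.

Fixpoint crun (t : nat) : cfg n :=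
  if t is t'.+1 then let c := crun t' in cfg_next x c (cacts c) else cfg0.

(* bbar of step t+1 *)
Definition cbcast (t : nat) : bits := bbar (cacts (crun t)).

Definition ccost (T : nat) : nat := \sum_(t < T) size (cbcast t).

End Classical.

Definition cwins {n} (tau : cstrat n) (g : game n) : Prop :=
  forall (e : gidx g) (w : cs_Omega tau), exists T,
    terminated (crun tau (ginst g e) w T) /\
    won (ginst g e) (crun tau (ginst g e) w T).

(* bbar_t is self-delimiting: for every player k still running (reading
   bbar_t), the possible values of bbar_t compatible with k's view are
   prefix-free. *)
Definition cselfdelim {n} (tau : cstrat n) (g : game n) : Prop :=
  forall (k : 'I_n) (t : nat) (e1 e2 : gidx g) (w1 w2 : cs_Omega tau),
    let x1 := ginst g e1 in let x2 := ginst g e2 in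
    cstat (crun tau x1 w1 t.+1) k = None ->
    cstat (crun tau x2 w2 t.+1) k = None ->
    cs_init tau w1 k = cs_init tau w2 k ->
    qry x1 k = qry x2 k ->
    chist (crun tau x1 w1 t) k = chist (crun tau x2 w2 t) k ->
    gmsgs x1 (cacts tau x1 w1 (crun tau x1 w1 t)) k =
      gmsgs x2 (cacts tau x2 w2 (crun tau x2 w2 t)) k ->
    prefix (cbcast tau x1 w1 t) (cbcast tau x2 w2 t) ->
    cbcast tau x1 w1 t = cbcast tau x2 w2 t.

Local Open Scope ereal_scope.

Definition Bc {n} (tau : cstrat n) (g : game n) : \bar Rdefinitions.R :=
  ereal_sup [set z | exists (e : gidx g) (w : cs_Omega tau) (T : nat),
                       z = ((ccost tau (ginst g e) w T)%:R)%:E].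

Definition Bcl {n} (g : game n) : \bar Rdefinitions.R :=
  ereal_inf [set Bc tau g | tau in [set tau : cstrat n | cwins tau g /\ cselfdelim tau g]].

Local Close Scope ereal_scope.

(* n qubits: amplitudes on the computational basis {|b>, b : [n] -> {0,1}} *)
Definition qstate (n : nat) := {ffun 'I_n -> bool} -> algC.

Definition bidx (b : bool) : 'I_2 := if b then ord_max else ord0.

Definition upd {n} (b : {ffun 'I_n -> bool}) (i : 'I_n) (c : bool) :
  {ffun 'I_n -> bool} := [ffun k => if k == i then c else b k].

Definition apply_local {n} (K : 'M[algC]_2) (i : 'I_n) (psi : qstate n) : qstate n :=
  fun b => (\sum_(c : bool) K (bidx (b i)) (bidx c) * psi (upd b i c))%R.

Definition is_instrument (l : seq 'M[algC]_2) : Prop :=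
  (\sum_(K <- l) (map_mx Num.conj K)^T *m K = 1%:M)%R.

Definition qpos {n} (psi : qstate n) : Prop := exists b, psi b != 0%R.

Definition ghz (n : nat) : qstate n := fun b =>
  if [forall i, b i == false] || [forall i, b i] then ((sqrtC 2)^-1)%R else 0%R.

(* In each step a running player applies an instrument on its qubit
   (chosen from its classical view), observes the outcome, and then
   produces its output from its view including all outcomes so far. *)
Record qstrat (n : nat) := QStrat {
  qs_Omega : Type;
  qs_omega0 : qs_Omega;
  qs_State : Type;
  qs_init : qs_Omega -> 'I_n -> qs_State;
  qs_instr : 'I_n -> qs_State -> bits -> seq (inp n) -> seq nat -> seq 'M[algC]_2;
  qs_instr_ok : forall i s q h o, is_instrument (qs_instr i s q h o);
  qs_act : 'I_n -> qs_State -> bits -> seq (inp n) -> seq nat -> action }.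
Arguments qs_Omega {n} _.
Arguments qs_State {n} _.
Arguments qs_init {n} _ _ _.
Arguments qs_instr {n} _ _ _ _ _ _.
Arguments qs_act {n} _ _ _ _ _ _.

Record qcfg (n : nat) := QCfg { qc : cfg n; qouts : 'I_n -> seq nat; qpsi : qstate n }.
Arguments QCfg {n} _ _ _.
Arguments qc {n} _.
Arguments qouts {n} _ _.
Arguments qpsi {n} _ _.

Section Quantum.
Context {n : nat}.
Variables (tau : qstrat n) (psi0 : qstate n) (x : instance n)
          (w : qs_Omega tau) (f : nat -> 'I_n -> nat).
(* f t i = outcome observed by player i in step t+1 (a branch) *)


Definition qrunning (c : qcfg n) (i : 'I_n) : bool :=
  if cstat (qc c) i is None then true else false.

Definition qouts_next (t : nat) (c : qcfg n) : 'I_n -> seq nat := fun i =>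
  if qrunning c i then rcons (qouts c i) (f t i) else qouts c i.

Definition qkraus (t : nat) (c : qcfg n) (i : 'I_n) : 'M[algC]_2 :=
  nth 0%R (qs_instr tau i (qs_init tau w i) (qry x i) (chist (qc c) i) (qouts c i)) (f t i).

Definition qpsi_next (t : nat) (c : qcfg n) : qstate n :=
  foldr (fun i phi => if qrunning c i then apply_local (qkraus t c i) i phi else phi)
        (qpsi c) (enum 'I_n).

Definition qacts (t : nat) (c : qcfg n) : 'I_n -> option action := fun i =>
  if qrunning c i
  then Some (qs_act tau i (qs_init tau w i) (qry x i) (chist (qc c) i) (qouts_next t c i))
  else None.

Fixpoint qrun (t : nat) : qcfg n :=
  if t is t'.+1 then
    let c := qrun t' in
    QCfg (cfg_next x (qc c) (qacts t' c)) (qouts_next t' c) (qpsi_next t' c)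
  else QCfg cfg0 (fun _ => [::]) psi0.

Definition qbcast (t : nat) : bits := bbar (qacts t (qrun t)).

Definition qcost (T : nat) : nat := \sum_(t < T) size (qbcast t).

End Quantum.

(* winning with certainty: on every branch, either the branch has
   probability 0 at some point, or the game terminates and is won *)
Definition qwins {n} (tau : qstrat n) (psi0 : qstate n) (g : game n) : Prop :=
  forall (e : gidx g) (w : qs_Omega tau) (f : nat -> 'I_n -> nat), exists T,
    ~ qpos (qpsi (qrun tau psi0 (ginst g e) w f T)) \/
    (terminated (qc (qrun tau psi0 (ginst g e) w f T)) /\
     won (ginst g e) (qc (qrun tau psi0 (ginst g e) w f T))).

Definition qselfdelim {n} (tau : qstrat n) (psi0 : qstate n) (g : game n) : Prop :=
  forall (k : 'I_n) (t : nat) (e1 e2 : gidx g) (w1 w2 : qs_Omega tau)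
         (f1 f2 : nat -> 'I_n -> nat),
    let x1 := ginst g e1 in let x2 := ginst g e2 in
    let c1 := qrun tau psi0 x1 w1 f1 t in let c2 := qrun tau psi0 x2 w2 f2 t in
    qpos (qpsi (qrun tau psi0 x1 w1 f1 t.+1)) ->
    qpos (qpsi (qrun tau psi0 x2 w2 f2 t.+1)) ->
    cstat (qc (qrun tau psi0 x1 w1 f1 t.+1)) k = None ->
    cstat (qc (qrun tau psi0 x2 w2 f2 t.+1)) k = None ->
    qs_init tau w1 k = qs_init tau w2 k ->
    qry x1 k = qry x2 k ->
    chist (qc c1) k = chist (qc c2) k ->
    qouts_next f1 t c1 k = qouts_next f2 t c2 k ->
    gmsgs x1 (qacts tau x1 w1 f1 t c1) k = gmsgs x2 (qacts tau x2 w2 f2 t c2) k ->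
    prefix (qbcast tau psi0 x1 w1 f1 t) (qbcast tau psi0 x2 w2 f2 t) ->
    qbcast tau psi0 x1 w1 f1 t = qbcast tau psi0 x2 w2 f2 t.

Local Open Scope ereal_scope.

Definition Bq {n} (tau : qstrat n) (psi0 : qstate n) (g : game n) : \bar Rdefinitions.R :=
  ereal_sup [set z | exists (e : gidx g) (w : qs_Omega tau)
                            (f : nat -> 'I_n -> nat) (T : nat),
                       qpos (qpsi (qrun tau psi0 (ginst g e) w f T)) /\
                       z = ((qcost tau psi0 (ginst g e) w f T)%:R)%:E].

Definition Bqm {n} (psi0 : qstate n) (g : game n) : \bar Rdefinitions.R :=
  ereal_inf [set Bq tau psi0 g |
             tau in [set tau : qstrat n | qwins tau psi0 g /\ qselfdelim tau psi0 g]].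

Local Close Scope ereal_scope.

Definition log2 (r : Rdefinitions.R) : Rdefinitions.R := (ln r / ln 2)%R.

(* Main.v *)
Require Import Defs.
From HB Require Import structures.
From mathcomp Require Import all_boot all_order all_algebra.
From mathcomp Require Import algC.
From mathcomp Require Import all_classical all_reals all_analysis.
From mathcomp Require Import Rstruct Rstruct_topology.
From mathcomp Require Import ring.

Module QA.
Import Order.TTheory GRing.Theory Num.Theory.
Local Open Scope ring_scope.

Definition ev (z : bool) : bool -> algC := fun x => (x == z)%:R.
Definition uv (w : algC) : bool -> algC := fun x => if x then w else 1.
Definition ib (a : 'I_2) : bool := a == ord_max.
Definition proj (u : bool -> algC) : 'M[algC]_2 :=
  \matrix_(a, b) (2^-1 * u (ib a) * (u (ib b))^*).
Definition meas (w : algC) : seq 'M[algC]_2 := [:: proj (uv w); proj (uv (- w))].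
Definition Kv (K : 'M[algC]_2) (v : bool -> algC) : bool -> algC :=
  fun x => \sum_(y : bool) K (bidx x) (bidx y) * v y.

Lemma ibK x : ib (bidx x) = x.
Proof. by case: x. Qed.

Lemma ib0 : ib ord0 = false. Proof. by []. Qed.
Lemma ibmax : ib ord_max = true. Proof. by rewrite /ib eqxx. Qed.

Lemma bidx_inj : injective bidx.
Proof. by case; case. Qed.

Lemma Kv_id v : Kv 1%:M v = v.
Proof.
apply: boolp.funext => x; rewrite /Kv big_bool /= !mxE.
by case: x => /=; rewrite ?mul1r ?mul0r ?addr0 ?add0r.
Qed.

Lemma Kv_0 v : Kv 0 v = fun _ => 0.
Proof.
apply: boolp.funext => x; rewrite /Kv big_bool /= !mxE.
by rewrite !mul0r addr0.
Qed.

Lemma Kv_lin K v s : Kv K (fun x => v x * s) = fun x => Kv K v x * s.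
Proof.
apply: boolp.funext => x; rewrite /Kv big_distrl /=.
by apply: eq_bigr => y _; rewrite mulrA.
Qed.

Lemma Kv_proj_e u z x : Kv (proj u) (ev z) x = 2^-1 * u x * (u z)^*.
Proof.
rewrite /Kv big_bool /= !mxE !ibK /ev.
by case: z; rewrite /= ?mulr1 ?mulr0 ?addr0 ?add0r.
Qed.

Lemma conj2V : (2^-1 : algC)^* = 2^-1.
Proof. by rewrite fmorphV rmorph_nat. Qed.

Lemma proj_herm u : (map_mx Num.conj (proj u))^T = proj u.
Proof.
apply/matrixP => a b; rewrite !mxE !rmorphM /= conj2V conjCK.
ring.
Qed.

Lemma nat2_neq0 : (2 : algC) != 0.
Proof. by rewrite pnatr_eq0. Qed.

Lemma proj_idem w : w^* * w = 1 -> proj (uv w) *m proj (uv w) = proj (uv w).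
Proof.
move=> E; apply/matrixP => a b; rewrite !mxE big_ord_recr big_ord_recl big_ord0 /=.
rewrite !mxE /uv /=.
set ua := (if ib a then w else 1); set ub := (if ib b then w else 1).
have -> : 2^-1 * ua * w^* * (2^-1 * w * ub^*) = 2^-1 * ua * (2^-1 * ub^*) * (w^* * w) by ring.
rewrite E rmorph1.
have h2 := nat2_neq0.
by field.
Qed.

Lemma ord2P (a : 'I_2) : a = ord0 \/ a = ord_max.
Proof. by case: a => [[|[|m]] h]; [left|right|]; try apply: val_inj. Qed.

Lemma proj_sum w : w^* * w = 1 -> proj (uv w) + proj (uv (- w)) = 1%:M.
Proof.
move=> E; have h2 := nat2_neq0.
apply/matrixP => a b; rewrite !mxE /uv.
case: (ord2P a) => ->; case: (ord2P b) => -> /=; rewrite ?ib0 ?ibmax /= ?rmorph1 ?rmorphN /=.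
- by field.
- by ring.
- by ring.
- have -> : 2^-1 * w * w^* + 2^-1 * - w * - w^* = 2^-1 * 2 * (w^* * w) by ring.
  by rewrite E mulr1 mulVf.
Qed.

Lemma meas_ok w : w^* * w = 1 -> is_instrument (meas w).
Proof.
move=> E; rewrite /is_instrument /meas !big_cons big_nil addr0 !proj_herm.
rewrite proj_idem // proj_idem ?proj_sum //.
by rewrite rmorphN /= mulrN mulNr opprK.
Qed.

Lemma one_ok : is_instrument [:: 1%:M].
Proof.
rewrite /is_instrument big_cons big_nil addr0 mulmx1.
apply/matrixP => a b; rewrite !mxE.
by rewrite rmorph_nat eq_sym.
Qed.

Definition pf {n} (c : algC) (V : bool -> 'I_n -> bool -> algC) : qstate n :=
  fun b => c * \sum_(z : bool) \prod_(k : 'I_n) V z k (b k).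

Lemma apply_local_pf n K (i : 'I_n) c V :
  apply_local K i (pf c V) = pf c (fun z k => if k == i then Kv K (V z k) else V z k).
Proof.
apply: boolp.funext => b; rewrite /apply_local /pf.
pose R z := \prod_(k | k != i) V z k (b k).
transitivity (\sum_(y : bool) \sum_(z : bool)
                 c * (K (bidx (b i)) (bidx y) * V z i y * R z)).
  apply: eq_big => // y _; rewrite mulrCA big_distrr /= big_distrr /=.
  apply: eq_bigr => z _; rewrite (bigD1 i) //= /upd ffunE eqxx.
  have -> : \prod_(k < n | k != i) V z k ([ffun k => if k == i then y else b k] k) = R z.
    by apply: eq_bigr => k nk; rewrite ffunE (negbTE nk).
  by rewrite !mulrA.
rewrite exchange_big big_distrr; apply: eq_bigr => z _.
rewrite (bigD1 i) //= eqxx /Kv big_distrl /= big_distrr; apply: eq_bigr => y _.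
rewrite /R; congr (c * (_ * _)).
by apply: eq_bigr => k nk; rewrite (negbTE nk).
Qed.

Lemma foldr_pf n (r : 'I_n -> bool) (K : 'I_n -> 'M[algC]_2) c V (l : seq 'I_n) :
  uniq l ->
  foldr (fun i phi => if r i then apply_local (K i) i phi else phi) (pf c V) l =
  pf c (fun z k => if (k \in l) && r k then Kv (K k) (V z k) else V z k).
Proof.
elim: l => [_|a l IH /andP [al ul]] /=.
  by congr pf; apply: boolp.funext => z; apply: boolp.funext => k.
rewrite IH //; case ra: (r a).
- rewrite apply_local_pf; congr pf; apply: boolp.funext => z; apply: boolp.funext => k.
  rewrite in_cons; case: (eqVneq k a) => [->|nka] /=; first by rewrite (negbTE al) /= ?ra.
  by [].
- congr pf; apply: boolp.funext => z; apply: boolp.funext => k.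
  rewrite in_cons; case: (eqVneq k a) => [->|nka] /=; first by rewrite (negbTE al) /= ?ra.
  by [].
Qed.

Lemma prod_nat_bool (I : finType) (P : pred I) :
  \prod_(k : I) (P k)%:R = ([forall k, P k])%:R :> algC.
Proof.
case: (boolP [forall k, P k]) => [/forallP H | /forallPn [k nk]].
- by rewrite big1 // => k _; rewrite H.
- by rewrite (bigD1 k) //= (negbTE nk) mul0r.
Qed.

Lemma ghz_pf n : (0 < n)%N -> ghz n = pf ((sqrtC 2)^-1) (fun z (_ : 'I_n) => ev z).
Proof.
move=> n0; apply: boolp.funext => b; rewrite /ghz /pf big_bool /= /ev !prod_nat_bool.
have E : [forall k, b k == true] = [forall k, b k].
  by apply: eq_forallb => k; rewrite eqb_id.
rewrite E.
case: (boolP [forall k, b k == false]) => [/forallP H0 | H0];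
case: (boolP [forall k, b k]) => [/forallP H1 | H1] /=.
- by have := H0 (Ordinal n0); rewrite H1.
- by rewrite add0r mulr1.
- by rewrite addr0 mulr1.
- by rewrite addr0 mulr0.
Qed.

Lemma pmap_single (T : eqType) (U : Type) (s : seq T) k (g : T -> option U) :
  uniq s -> pmap (fun p => if p == k then g p else None) s =
            if k \in s then (if g k is Some u then [:: u] else [::]) else [::].
Proof.
elim: s => //= a s IH /andP [ha hu]; rewrite IH // in_cons.
case: (eqVneq a k) => [<-|nak] /=; last by [].
by rewrite (negbTE ha); case: (g a).
Qed.

Definition Fct (v : bool -> bool -> algC) (be : bool -> algC) :=
  forall z xx, v z xx = v false xx * be z.

Lemma F_lift K v be : Fct v be -> Fct (fun z => Kv K (v z)) be.
Proof.
move=> F z xx /=.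
have -> : v z = fun y => v false y * be z by apply: boolp.funext => y; apply: F.
by rewrite Kv_lin.
Qed.

Lemma F_zero be : Fct (fun _ _ => 0) be.
Proof. by move=> z xx; rewrite mul0r. Qed.

Lemma Kv_zero_vec K : Kv K (fun _ => 0) = fun _ => 0.
Proof.
apply: boolp.funext => xx; rewrite /Kv big1 // => y _; by rewrite mulr0.
Qed.

Lemma Kv_nth1 m v : Kv (nth 0 [:: 1%:M] m) v = if m == 0%N then v else (fun _ => 0).
Proof. by case: m => [|m] /=; rewrite ?Kv_id ?nth_nil ?Kv_0. Qed.

Lemma F_meas w m : Fct (fun z => Kv (nth 0 (meas w) m) (ev z))
                       (fun z => (uv (if m == 1%N then - w else w) z)^*).
Proof.
case: m => [|[|m]] z xx /=; rewrite ?Kv_proj_e ?nth_nil ?Kv_0 ?mul0r //.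
- by rewrite /uv /= rmorph1 mulr1.
- by rewrite /uv /= rmorph1 mulr1.
Qed.

Lemma prod_sign (T : Type) (g : T -> bool) (s : seq T) :
  \prod_(k <- s) (if g k then -1 else 1) =
  (if foldr (fun k acc => xorb (g k) acc) false s then -1 else 1 : algC).
Proof.
elim: s => [|a s IH]; first by rewrite big_nil.
rewrite big_cons IH /=.
by case: (g a); case: (foldr _ _ _); rewrite /= ?mulr1 ?mul1r ?mulrNN ?mulr1.
Qed.

Lemma prod_split n (F G : 'I_n -> algC) :
  \prod_(k < n) (F k * G k) = \prod_(k < n) F k * \prod_(k < n) G k.
Proof. by rewrite big_split. Qed.

End QA.
Import QA.

Module CA.
Import Order.TTheory GRing.Theory Num.Theory.

Lemma prefix_cmp (T : eqType) (p a b r : seq T) :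
  prefix (p ++ a) r -> prefix (p ++ b) r -> prefix a b \/ prefix b a.
Proof.
move=> /prefixP [ra Ha] /prefixP [rb Hb].
rewrite Ha -!catA in Hb; move/eqP: Hb; rewrite eqseq_cat // eqxx /= => /eqP Hab.
case: (leqP (size a) (size b)) => h.
- left; rewrite prefixE; apply/eqP.
  have: take (size a) (a ++ ra) = a by rewrite takel_cat // take_size.
  by rewrite Hab takel_cat.
- right; rewrite prefixE; apply/eqP; have h' := ltnW h.
  have: take (size b) (b ++ rb) = b by rewrite takel_cat // take_size.
  by rewrite -Hab takel_cat.
Qed.



Section Classical.
Variable n : nat.
Variable tau : cstrat n.

Definition Xe (e : gidx (game_s n)) : instance n := ginst (game_s n) e.

Definition Bs (x : instance n) w T : bits :=
  flatten [seq cbcast tau x w t | t <- iota 0 T].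

Lemma Bs_S x w T : Bs x w T.+1 = Bs x w T ++ cbcast tau x w T.
Proof. by rewrite /Bs -addn1 iotaD map_cat flatten_cat /= cats0. Qed.

Lemma ccost_Bs x w T : ccost tau x w T = size (Bs x w T).
Proof.
elim: T => [|T IH]; first by rewrite /ccost big_ord0.
by rewrite /ccost big_ord_recr /= -/(ccost _ _ _ _) IH Bs_S size_cat.
Qed.

Definition pairp (e : gidx (game_s n)) (k : 'I_n) :=
  (k == (sval e).1) || (k == (sval e).2).

Lemma gs_group_pair (i j k p : 'I_n) : i != j -> (k == i) || (k == j) ->
  (gs_group i j p == gs_group i j k) = (p == k).
Proof.
move=> nij /orP [] /eqP Hk; subst k; rewrite /gs_group.
- rewrite eqxx; case: (p =P i) => [_|npi] //.
  by case: (p == j).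
- rewrite [j == i]eq_sym (negbTE nij) eqxx.
  case: (p =P i) => [->|npi]; first by rewrite (negbTE nij).
  by case: (p =P j).
Qed.

Lemma e_neq (e : gidx (game_s n)) : (sval e).1 != (sval e).2.
Proof. by case: e => [[a b]] /= h; apply/negP => /eqP E; rewrite E ltnn in h. Qed.

Lemma qry_pair e k : pairp e k -> qry (Xe e) k = [:: false].
Proof.
case: e => [[a b]] /= h; rewrite /pairp /= /qry /= /gs_query /gs_group.
case/orP => /eqP ->; first by rewrite eqxx.
have nab : b != a by apply/negP => /eqP E; rewrite E ltnn in h.
by rewrite (negbTE nab) eqxx.
Qed.

Lemma gmsgs_pair e (a : 'I_n -> option action) k : pairp e k ->
  gmsgs (Xe e) a k = if a k is Some (Send false s) then [:: (k, s)] else [::].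
Proof.
move=> hk; rewrite /gmsgs.
have -> : (fun i => if group_of (Xe e) i == group_of (Xe e) k then
              (if a i is Some (Send false s) then Some (i, s) else None) else None)
  = (fun i => if i == k then
              (if a i is Some (Send false s) then Some (i, s) else None) else None).
  apply: boolp.funext => p /=.
  by rewrite gs_group_pair // e_neq.
by rewrite pmap_single ?enum_uniq // mem_enum; case: (a k) => // -[] // [] .
Qed.

Let w0 := @cs_omega0 n tau.
Notation crn e t := (crun tau (Xe e) w0 t).
Notation Bse e t := (Bs (Xe e) w0 t).

Hypothesis Hsd : cselfdelim tau (game_s n).

Lemma inv e1 e2 k r : pairp e1 k -> pairp e2 k -> forall t,
  prefix (Bse e1 t) r -> prefix (Bse e2 t) r ->
  [/\ cstat (crn e1 t) k = cstat (crn e2 t) k,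
      chist (crn e1 t) k = chist (crn e2 t) k &
      (cstat (crn e1 t) k = None -> Bse e1 t = Bse e2 t)].
Proof.
move=> p1 p2; elim => [|t IH] P1 P2; first by [].
have [S H B] : [/\ cstat (crn e1 t) k = cstat (crn e2 t) k,
      chist (crn e1 t) k = chist (crn e2 t) k &
      (cstat (crn e1 t) k = None -> Bse e1 t = Bse e2 t)].
  by apply: IH; [move: P1 | move: P2]; rewrite Bs_S => /catl_prefix.
have ha : cacts tau (Xe e1) w0 (crn e1 t) k = cacts tau (Xe e2) w0 (crn e2 t) k.
  by rewrite /cacts S H !qry_pair.
have Hst : cstat (crn e1 t.+1) k = cstat (crn e2 t.+1) k.
  by rewrite /= ha S.
have Hbb : cstat (crn e1 t.+1) k = None ->
           cbcast tau (Xe e1) w0 t = cbcast tau (Xe e2) w0 t.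
  move=> N1.
  have N2 : cstat (crn e2 t.+1) k = None by rewrite -Hst.
  have O1 : cstat (crn e1 t) k = None.
    move: N1; rewrite /= /cacts.
    by case: (cstat (crn e1 t) k).
  have EB := B O1.
  rewrite !Bs_S EB in P1 P2.
  have hg : gmsgs (Xe e1) (cacts tau (Xe e1) w0 (crn e1 t)) k =
            gmsgs (Xe e2) (cacts tau (Xe e2) w0 (crn e2 t)) k.
    by rewrite !gmsgs_pair // ha.
  have hq : qry (Xe e1) k = qry (Xe e2) k by rewrite !qry_pair.
  case: (prefix_cmp _ _ _ _ _ P1 P2) => hp.
  - by have := Hsd k t e1 e2 w0 w0 N1 N2 erefl; apply.
  - by apply/esym; have := Hsd k t e2 e1 w0 w0 N2 N1 erefl; apply.
split => //.
- move: Hbb; rewrite /= !gmsgs_pair // -ha -S H /cbcast.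
  case: (cacts tau (Xe e1) w0 (crn e1 t) k) => [ [oo|bb s] | ] /=; try by [].
  + case: (cstat (crn e1 t) k) => [//|] /(_ erefl) ->; by [].
  + case: (cstat (crn e1 t) k) => [//|] /(_ erefl) ->; by [].
- move=> N1; rewrite !Bs_S (Hbb N1).
  have O1 : cstat (crn e1 t) k = None.
    move: N1; rewrite /= /cacts.
    by case: (cstat (crn e1 t) k).
  by rewrite (B O1).
Qed.


Lemma bbar_none : bbar (fun _ : 'I_n => None) = [::].
Proof. by rewrite /bbar; elim: (enum 'I_n). Qed.

Lemma cacts_term x w c : terminated c -> cacts tau x w c = fun _ => None.
Proof.
move=> Tc; apply: boolp.funext => i; rewrite /cacts.
by case E: (cstat c i) => //; have := Tc i; rewrite E.
Qed.

Lemma crun_stable x w T : terminated (crun tau x w T) -> forall d,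
  crun tau x w (d + T) = crun tau x w T /\ Bs x w (d + T) = Bs x w T.
Proof.
move=> Tc; elim => [|d [IH1 IH2]] //.
rewrite addSn Bs_S IH2 /cbcast /= IH1 (cacts_term _ _ _ Tc) bbar_none cats0; split=> //.
move: Tc; case: (crun tau x w T) => h st Tc /=; congr Cfg; apply: boolp.funext => i /=.
by case E: (st i) => //; have := Tc i; rewrite /= E.
Qed.

Lemma wd e1 e2 k T1 T2 r : pairp e1 k -> pairp e2 k ->
  terminated (crn e1 T1) -> terminated (crn e2 T2) ->
  prefix (Bse e1 T1) r -> prefix (Bse e2 T2) r ->
  cstat (crn e1 T1) k = cstat (crn e2 T2) k.
Proof.
move=> p1 p2 t1 t2 P1 P2.
have [A1 B1] := crun_stable _ _ _ t1 T2; have [A2 B2] := crun_stable _ _ _ t2 T1.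
rewrite -A1 -A2 (addnC T2 T1); rewrite -B1 (addnC T2 T1) in P1; rewrite -B2 in P2.
by have [] := inv _ _ _ _ p1 p2 _ P1 P2.
Qed.

Lemma group_output_some (x : instance n) c g s : group_output x c g = s -> s <> [::] ->
  exists p, group_of x p = g /\ cstat c p = Some (Some s).
Proof.
rewrite /group_output; case: pickP => [p /andP [/eqP Hg Ho] | _ ]; last by move=> <-.
move: Ho; case E: (cstat c p) => [[s'|]|] //= _ <- _.
by exists p.
Qed.

Lemma outputs e T : terminated (crn e T) -> won (Xe e) (crn e T) ->
  exists bo, cstat (crn e T) (sval e).1 = Some (Some [:: bo]) /\
             cstat (crn e T) (sval e).2 = Some (Some [:: ~~ bo]).
Proof.
move=> _ [_ Hw].
have ne := e_neq e.
move: Hw; rewrite /= /gs_allowed.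
set i := (sval e).1; set j := (sval e).2.
have G0 : forall p, group_of (Xe e) p = @Ordinal 3 0 isT -> p = i.
  move=> p; rewrite /= /gs_group; case: (p =P i) => // _.
  by case: (p == j).
have G1 : forall p, group_of (Xe e) p = @Ordinal 3 1 isT -> p = j.
  move=> p; rewrite /= /gs_group; case: (p =P i) => // _.
  by case: (p =P j).
case=> [[H0 [H1 _]] | [H0 [H1 _]]].
- have [p [gp cp]] := group_output_some _ _ _ _ H0 (fun h => ltac:(discriminate h)).
  have [q [gq cq]] := group_output_some _ _ _ _ H1 (fun h => ltac:(discriminate h)).
  by exists false; rewrite -(G0 _ gp) -(G1 _ gq).
- have [p [gp cp]] := group_output_some _ _ _ _ H0 (fun h => ltac:(discriminate h)).
  have [q [gq cq]] := group_output_some _ _ _ _ H1 (fun h => ltac:(discriminate h)).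
  by exists true; rewrite -(G0 _ gp) -(G1 _ gq).
Qed.


Hypothesis Hwin : cwins tau (game_s n).

Lemma counting b : (forall e T, ccost tau (Xe e) w0 T <= b) -> n <= 2 ^ (2 ^ b).
Proof.
move=> Hb.
pose o (k : 'I_n) : {ffun b.-tuple bool -> bool} :=
  [ffun r : b.-tuple bool => `[< exists e T, [/\ pairp e k, terminated (crn e T),
      prefix (Bse e T) r & cstat (crn e T) k = Some (Some [:: true])] >]].
have distinct : forall (i j : 'I_n), i < j -> o i != o j.
  move=> i j h.
  pose e : gidx (game_s n) := exist (fun p : 'I_n * 'I_n => p.1 < p.2) (i, j) h.
  have [T [Tt Tw]] := Hwin e w0.
  have [bo [Ci Cj]] := outputs _ _ Tt Tw.
  pose s := Bse e T.
  have hs : size s <= b by rewrite -ccost_Bs; apply: Hb.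
  pose pad := s ++ nseq (b - size s) false.
  have hp : size pad == b by rewrite size_cat size_nseq subnKC.
  pose r := Tuple hp.
  have claim : forall k c, pairp e k -> cstat (crn e T) k = Some (Some [:: c]) -> o k r = c.
    move=> k c pk Ck; rewrite ffunE; case: c Ck => Ck.
    - apply/asboolP; exists e, T; split => //; exact: prefix_prefix.
    - apply/asboolF => -[e' [T' [pk' tT' pr' c']]].
      have := wd _ _ _ _ _ _ pk' pk tT' Tt pr' (prefix_prefix s _).
      by rewrite c' Ck => -[].
  have hi : o i r = bo by apply: claim Ci; rewrite /pairp eqxx.
  have hj : o j r = ~~ bo by apply: claim Cj; rewrite /pairp eqxx orbT.
  apply/negP => /eqP E; move: hi; rewrite E hj.
  by case: (bo).
have inj : injective o.
  move=> i j E; case: (ltngtP i j) => h.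
  - by have := distinct _ _ h; rewrite E eqxx.
  - by have := distinct _ _ h; rewrite E eqxx.
  - exact: val_inj.
have := leq_card o inj.
by rewrite card_ord card_ffun card_tuple card_bool.
Qed.

End Classical.

Local Open Scope ring_scope.
Lemma loglog (m b : nat) : (5 <= m)%N -> (m <= 2 ^ (2 ^ b))%N ->
  log2 (log2 m%:R) <= b%:R :> Rdefinitions.R.
Proof.
move=> h5 hm.
have hN1 : 1 < m%:R :> Rdefinitions.R by rewrite ltr1n; apply: leq_trans h5.
have L2 : 0 < ln (2 : Rdefinitions.R) by apply: ln_gt0; rewrite ltr1n.
have key : forall (y : Rdefinitions.R) (k : nat), 0 < y -> y <= 2 ^+ k -> log2 y <= k%:R.
  move=> y k y0 yk; rewrite /log2 ler_pdivrMr // mulr_natl -lnXn //.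
  by rewrite ler_ln // posrE // exprn_gt0.
have h1 : log2 m%:R <= (2 ^ b)%:R.
  apply: key; first by apply: lt_trans hN1.
  by rewrite -natrX ler_nat.
apply: key.
  by rewrite /log2 divr_gt0 // ln_gt0.
by rewrite -natrX.
Qed.

Lemma classical_bound (n : nat) : (5 <= n)%N ->
  ((log2 (log2 (n%:R)))%:E <= Bcl (game_s n))%E.
Proof.
move=> h5; apply/ereal_infP => _ [tau [Hw Hs] <-].
have n1 : (1 < n)%N by apply: leq_trans h5.
pose e0 : gidx (game_s n) :=
  exist (fun p : 'I_n * 'I_n => (p.1 < p.2)%N) (Ordinal (ltnW n1), Ordinal n1) isT.
have H0 : forall e w T, (((ccost tau (ginst (game_s n) e) w T)%:R)%:E <= Bc tau (game_s n))%E.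
  by move=> e w T; apply: ereal_sup_ubound; exists e, w, T.
case E: (Bc tau (game_s n)) => [M| |].
- have M0 : 0 <= M.
    by have := H0 e0 (@cs_omega0 n tau) 0%N; rewrite E lee_fin; apply: le_trans.
  have Hb : forall e T, (ccost tau (@Xe n e) (@cs_omega0 n tau) T <= Num.truncn M)%N.
    by move=> e T; rewrite truncn_ge_nat //; have := H0 e (@cs_omega0 n tau) T; rewrite E lee_fin.
  have hc := @counting n tau Hs Hw _ Hb.
  rewrite lee_fin; apply: le_trans (loglog _ _ h5 hc) _.
  by rewrite truncn_le.
- exact: leey.
- by have := H0 e0 (@cs_omega0 n tau) 0%N; rewrite E.
Qed.

End CA.
Import CA.

Module QB.
Import Order.TTheory GRing.Theory Num.Theory.
Local Open Scope ring_scope.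

Section Strat.
Variable n : nat.

Definition gm_parity (l : seq ('I_n * bits)) : bool :=
  foldr (fun m acc => xorb (head false m.2) acc) false l.
Definition first_gm (h : seq (inp n)) : seq ('I_n * bits) := (head ([::], [::]) h).1.
Definition desig (k : 'I_n) (h : seq (inp n)) : bool := head k (map fst (first_gm h)) == k.
Definition lastb (h : seq (inp n)) : bool := head false (last ([::], [::]) h).2.
Definition helperq (q : bits) : bool := q == [:: true].

Definition sinstr (k : 'I_n) (s : unit) (q : bits) (h : seq (inp n)) (o : seq nat) : seq 'M[algC]_2 :=
  if helperq q then (if size h == 0%N then meas 1 else [:: 1%:M])
  else (if size h == 2%N then (if lastb h then meas 1 else meas 'i) else [:: 1%:M]).

Lemma conj1_ok : (1 : algC)^* * 1 = 1.
Proof. by rewrite rmorph1 mulr1. Qed.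

Lemma conji_ok : ('i : algC)^* * 'i = 1.
Proof. by rewrite conjCi mulNr -expr2 sqrCi opprK. Qed.

Lemma sinstr_ok k s q h o : is_instrument (sinstr k s q h o).
Proof.
rewrite /sinstr; case: ifP => _; case: ifP => _; try case: ifP => _;
  by [apply: meas_ok; [exact: conj1_ok | exact: conji_ok] | apply: one_ok | apply: meas_ok; exact: conj1_ok | apply: meas_ok; exact: conji_ok].
Qed.

Definition sact (k : 'I_n) (s : unit) (q : bits) (h : seq (inp n)) (o : seq nat) : action :=
  if helperq q then
    (if size h == 0%N then Send false [:: last 0%N o == 1%N]
     else if size h == 1%N then
       (if desig k h then Send true [:: gm_parity (first_gm h)] else Halt None)
     else Halt None)
  else (if size h == 2%N then Halt (Some [:: last 0%N o == 1%N]) else Send false [::]).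

Definition qtau : qstrat n :=
  @QStrat n unit tt unit (fun _ _ => tt) sinstr sinstr_ok sact.

End Strat.

Lemma cstat_next n (x : instance n) c a k : cstat (cfg_next x c a) k =
  (if a k is Some (Halt o) then Some o else cstat c k).
Proof. by []. Qed.

Lemma chist_next n (x : instance n) c a k : chist (cfg_next x c a) k =
  (if (if a k is Some (Halt o) then Some o else cstat c k) is None
   then rcons (chist c k) (gmsgs x a k, bbar a) else chist c k).
Proof. by []. Qed.

Lemma pmap_filter (T U : Type) (P : pred T) (g : T -> U) (s : seq T) :
  pmap (fun p => if P p then Some (g p) else None) s = map g [seq q <- s | P q].
Proof. by elim: s => //= a s IH; case: (P a) => /=; rewrite IH. Qed.

Section Run.
Variables (n : nat) (i j : 'I_n) (f : nat -> 'I_n -> nat).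
Hypothesis nij : i != j.
Let x := gs_instance i j.
Definition pairk (k : 'I_n) := (k == i) || (k == j).
Let c t := qrun (qtau n) (ghz n) x tt f t.

Lemma qry_x k : qry x k = if pairk k then [:: false] else [:: true].
Proof.
rewrite /qry /= /gs_query /gs_group /pairk.
by case: (k == i); case: (k == j).
Qed.

Lemma helperq_x k : helperq (qry x k) = ~~ pairk k.
Proof. by rewrite qry_x; case: (pairk k). Qed.

Lemma helperq_gs k : helperq (gs_query (gs_group i j k)) = ~~ pairk k.
Proof. exact: helperq_x. Qed.

Lemma c1_stat k : cstat (qc (c 1)) k = None.
Proof. by rewrite /c /= /sact helperq_gs; case: (pairk k). Qed.

Lemma c1_outs k : qouts (c 1) k = [:: f 0 k].
Proof. by []. Qed.

Definition L0 := [seq (p, [:: f 0%N p == 1%N]) | p <- [seq q <- enum 'I_n | ~~ pairk q]].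

Lemma gs_group_pairk (k p : 'I_n) : pairk k ->
  (gs_group i j p == gs_group i j k) = (p == k).
Proof.
rewrite /pairk => /orP [] /eqP Hk; subst k; rewrite /gs_group.
- rewrite eqxx; case: (p =P i) => [_|npi] //.
  by case: (p == j).
- rewrite [j == i]eq_sym (negbTE nij) eqxx.
  case: (p =P i) => [->|npi]; first by rewrite (negbTE nij).
  by case: (p =P j).
Qed.

Lemma gs_group_help (k p : 'I_n) : ~~ pairk k ->
  (gs_group i j p == gs_group i j k) = ~~ pairk p.
Proof.
rewrite /pairk negb_or => /andP [ki kj]; rewrite /gs_group (negbTE ki) (negbTE kj).
by case: (p == i); case: (p == j).
Qed.

Lemma gmsgs_pairk a k : pairk k ->
  gmsgs x a k = if a k is Some (Send false s) then [:: (k, s)] else [::].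
Proof.
move=> hk; rewrite /gmsgs.
have -> : (fun p => if group_of x p == group_of x k then
              (if a p is Some (Send false s) then Some (p, s) else None) else None)
  = (fun p => if p == k then
              (if a p is Some (Send false s) then Some (p, s) else None) else None).
  by apply: boolp.funext => p /=; rewrite gs_group_pairk.
by rewrite pmap_single ?enum_uniq // mem_enum; case: (a k) => // -[] // [] .
Qed.

Lemma gmsgs_help a k : ~~ pairk k ->
  gmsgs x a k = pmap (fun p => if ~~ pairk p then
     (if a p is Some (Send false s) then Some (p, s) else None) else None) (enum 'I_n).
Proof.
move=> hk; rewrite /gmsgs; congr pmap; apply: boolp.funext => p /=.
by rewrite gs_group_help.
Qed.

Definition a0 : 'I_n -> option action :=
  fun p => Some (Send false (if pairk p then [::] else [:: f 0%N p == 1%N])).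

Lemma qacts0 : qacts (qtau n) x tt f 0 (c 0) = a0.
Proof.
apply: boolp.funext => p; rewrite /qacts /= /sact helperq_gs /a0.
by case: (pairk p).
Qed.

Lemma bbar_a0 : bbar a0 = [::].
Proof. by rewrite /bbar /a0; elim: (enum 'I_n) => //= a l ->. Qed.

Lemma gmsgs_a0 k : gmsgs x a0 k = if pairk k then [:: (k, [::])] else L0.
Proof.
case hk: (pairk k).
- by rewrite gmsgs_pairk // /a0 hk.
- rewrite gmsgs_help ?hk // /L0 -pmap_filter; congr pmap; apply: boolp.funext => p /=.
  by rewrite /a0; case: (pairk p).
Qed.

Lemma c1_hist k : chist (qc (c 1)) k = [:: (if pairk k then [:: (k, [::])] else L0, [::])].
Proof.
have -> : c 1 = QCfg (cfg_next x cfg0 a0) (qouts_next f 0 (c 0)) (qpsi_next (qtau n) x tt f 0 (c 0)).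
  by rewrite /c /= -qacts0.
by rewrite /= /a0 /= bbar_a0 gmsgs_a0.
Qed.

Hypothesis hn : (2 < n)%N.

Lemma exists_helper : exists p, ~~ pairk p.
Proof.
case: (boolP [exists p, ~~ pairk p]) => [/fintype.existsP //| /fintype.existsPn H].
have sub : [set: 'I_n] \subset [set i; j].
  apply/fintype.subsetP => p _; rewrite !inE.
  by have := H p; rewrite negbK.
have := subset_leq_card sub; rewrite cardsT card_ord cards2.
by case: (i != j) => /= h; move: hn; rewrite ltnNge (leq_trans h).
Qed.

Lemma L0_ne : L0 != [::].
Proof.
have [p hp] := exists_helper.
apply/eqP => E; have : (p, [:: f 0%N p == 1%N]) \in L0.
  by apply: map_f; rewrite mem_filter hp mem_enum.
by rewrite E.
Qed.

Definition d0 := head i [seq m.1 | m <- L0].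
Definition par := gm_parity n L0.

Lemma d0_help : ~~ pairk d0.
Proof.
have := L0_ne; rewrite /d0 /L0.
case E: [seq q <- enum 'I_n | ~~ pairk q] => [|a l] //= _.
have : a \in [seq q <- enum 'I_n | ~~ pairk q] by rewrite E mem_head.
by rewrite mem_filter => /andP [].
Qed.

Lemma head_L0 k : head k [seq m.1 | m <- L0] = d0.
Proof. by have := L0_ne; rewrite /d0; case: L0. Qed.

Definition a1 : 'I_n -> option action :=
  fun p => Some (if pairk p then Send false [::]
                 else if p == d0 then Send true [:: par] else Halt None).

Lemma qacts1 : qacts (qtau n) x tt f 1 (c 1) = a1.
Proof.
apply: boolp.funext => p; rewrite /qacts /qrunning c1_stat c1_hist /= /sact helperq_x /a1.
case hp: (pairk p) => //=.
rewrite /d0 /par; have := L0_ne; case: (L0) => [//|m l] _ /=.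
by rewrite eq_sym.
Qed.

Lemma flatten_single (T : eqType) (U : Type) (l : seq T) d (s : seq U) :
  uniq l -> d \in l -> flatten [seq (if p == d then s else [::]) | p <- l] = s.
Proof.
elim: l => //= a l IH /andP [al ul]; rewrite in_cons.
case: (eqVneq a d) => [<- _|nad] /=; last by apply: IH.
rewrite -[RHS]cats0; congr (_ ++ _).
elim: l al {IH ul} => //= b l IH; rewrite in_cons negb_or => /andP [ab al].
by rewrite eq_sym (negbTE ab) /= IH.
Qed.

Lemma bbar_a1 : bbar a1 = [:: par].
Proof.
rewrite /bbar -[RHS](@flatten_single _ _ _ d0 [:: par] (enum_uniq 'I_n) (mem_enum _ d0)).
congr flatten; apply: eq_map => p; rewrite /bcast_part /a1.
case: (eqVneq p d0) => [->|npd].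
- by rewrite (negbTE d0_help).
- by case: (pairk p).
Qed.

Lemma c2_stat k : cstat (qc (c 2)) k = if pairk k || (k == d0) then None else Some None.
Proof.
have -> : qc (c 2) = cfg_next x (qc (c 1)) a1 by rewrite -qacts1.
rewrite cstat_next /a1 c1_stat.
by case: (pairk k) => //=; case: (k == d0).
Qed.

Lemma c2_hist k : pairk k || (k == d0) ->
  chist (qc (c 2)) k = rcons (chist (qc (c 1)) k) (gmsgs x a1 k, [:: par]).
Proof.
have -> : qc (c 2) = cfg_next x (qc (c 1)) a1 by rewrite -qacts1.
rewrite chist_next bbar_a1 {1}/a1 c1_stat.
by case: (pairk k) => //= ->.
Qed.

Lemma c2_outs k : qouts (c 2) k = [:: f 0%N k; f 1%N k].
Proof. by rewrite /c /= /qouts_next /qrunning c1_stat. Qed.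


Definition a2 : 'I_n -> option action :=
  fun p => if pairk p || (p == d0)
           then Some (if pairk p then Halt (Some [:: f 2%N p == 1%N]) else Halt None)
           else None.

Lemma c2_hist_size k : pairk k || (k == d0) -> size (chist (qc (c 2)) k) = 2%N.
Proof. by move=> h; rewrite c2_hist // size_rcons c1_hist. Qed.

Lemma qacts2 : qacts (qtau n) x tt f 2 (c 2) = a2.
Proof.
apply: boolp.funext => p; rewrite /qacts /qrunning c2_stat /a2.
case hr: (pairk p || (p == d0)) => //.
rewrite /qouts_next /qrunning c2_stat hr c2_outs.
change (qs_act (qtau n)) with (sact n); rewrite /sact helperq_x c2_hist_size //=.
by case: (pairk p).
Qed.

Lemma bbar_a2 : bbar a2 = [::].
Proof.
rewrite /bbar /bcast_part /a2; elim: (enum 'I_n) => //= a l ->.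
by case: (pairk a); case: (a == d0).
Qed.

Lemma c3_stat k : cstat (qc (c 3)) k = Some (if pairk k then Some [:: f 2%N k == 1%N] else None).
Proof.
have -> : qc (c 3) = cfg_next x (qc (c 2)) a2 by rewrite -qacts2.
rewrite cstat_next /a2 c2_stat.
by case: (pairk k) => //=; case: (k == d0).
Qed.

Lemma stat_late t k : (3 <= t)%N -> cstat (qc (c t)) k = Some (if pairk k then Some [:: f 2%N k == 1%N] else None).
Proof.
elim: t => // t IH; rewrite leq_eqVlt => /orP [/eqP <-|h]; first exact: c3_stat.
have IH' := IH h.
have -> : qc (c t.+1) = cfg_next x (qc (c t)) (qacts (qtau n) x tt f t (c t)) by [].
by rewrite cstat_next /qacts /qrunning IH'.
Qed.

Lemma qacts_late t : (3 <= t)%N -> qacts (qtau n) x tt f t (c t) = fun _ => None.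
Proof.
move=> h; apply: boolp.funext => p.
by rewrite /qacts /qrunning stat_late.
Qed.

Lemma qbcast_val t : qbcast (qtau n) (ghz n) x tt f t = if t == 1%N then [:: par] else [::].
Proof.
rewrite /qbcast -/(c t).
case: t => [|[|[|t]]].
- by rewrite qacts0 bbar_a0.
- by rewrite qacts1 bbar_a1.
- by rewrite qacts2 bbar_a2.
- rewrite qacts_late //; rewrite /bbar /bcast_part.
  by elim: (enum 'I_n).
Qed.


Definition cst : algC := (sqrtC 2)^-1.
Definition K0 k := nth 0 (if pairk k then [:: 1%:M] else meas 1) (f 0%N k).
Definition K1 k := nth 0 [:: (1%:M : 'M[algC]_2)] (f 1%N k).
Definition K2 k := nth 0 (if pairk k then (if par then meas 1 else meas 'i) else [:: 1%:M]) (f 2%N k).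

Lemma psi1 : qpsi (c 1) = pf cst (fun z k => Kv (K0 k) (ev z)).
Proof.
have -> : qpsi (c 1) = qpsi_next (qtau n) x tt f 0 (c 0) by [].
rewrite /qpsi_next.
have -> : qpsi (c 0) = ghz n by [].
rewrite ghz_pf; last by apply: leq_trans hn.
rewrite (@foldr_pf n (qrunning (c 0)) (qkraus (qtau n) x tt f 0 (c 0))) ?enum_uniq //; congr pf; apply: boolp.funext => z; apply: boolp.funext => k.
rewrite mem_enum /= /qkraus.
change (qs_instr (qtau n)) with (sinstr n); rewrite /sinstr helperq_x /K0 /=.
by case: (pairk k).
Qed.

Lemma psi2 : qpsi (c 2) = pf cst (fun z k => Kv (K1 k) (Kv (K0 k) (ev z))).
Proof.
have -> : qpsi (c 2) = qpsi_next (qtau n) x tt f 1 (c 1) by [].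
rewrite /qpsi_next psi1.
rewrite (@foldr_pf n (qrunning (c 1)) (qkraus (qtau n) x tt f 1 (c 1))) ?enum_uniq //; congr pf; apply: boolp.funext => z; apply: boolp.funext => k.
rewrite mem_enum /qrunning c1_stat /= /qkraus c1_hist.
change (qs_instr (qtau n)) with (sinstr n); rewrite /sinstr helperq_x /K1 /=.
by case: (pairk k).
Qed.

Lemma psi3 : qpsi (c 3) = pf cst (fun z k => if pairk k || (k == d0)
   then Kv (K2 k) (Kv (K1 k) (Kv (K0 k) (ev z))) else Kv (K1 k) (Kv (K0 k) (ev z))).
Proof.
have -> : qpsi (c 3) = qpsi_next (qtau n) x tt f 2 (c 2) by [].
rewrite /qpsi_next psi2.
rewrite (@foldr_pf n (qrunning (c 2)) (qkraus (qtau n) x tt f 2 (c 2))) ?enum_uniq //; congr pf; apply: boolp.funext => z; apply: boolp.funext => k.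
rewrite mem_enum /qrunning c2_stat.
have -> : k \in 'I_n by [].
case hr: (pairk k || (k == d0)); rewrite ?andbT ?andbF //.
rewrite /qkraus.
change (qs_instr (qtau n)) with (sinstr n); rewrite /sinstr helperq_x c2_hist_size // /K2.
case hp: (pairk k) => //.
by rewrite /lastb c2_hist // last_rcons.
Qed.


Definition w0 : algC := if par then 1 else 'i.
Definition bet k : bool -> algC :=
  if pairk k then (fun z => (uv (if f 2%N k == 1%N then - w0 else w0) z)^*)
  else (fun z => (uv (if f 0%N k == 1%N then -1 else 1) z)^*).
Definition V3 z k := if pairk k || (k == d0)
   then Kv (K2 k) (Kv (K1 k) (Kv (K0 k) (ev z))) else Kv (K1 k) (Kv (K0 k) (ev z)).

Lemma V3_fact k : Fct (fun z => V3 z k) (bet k).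
Proof.
rewrite /V3 /bet /K0 /K1 /K2; case hp: (pairk k) => /=.
- have -> : (if par then meas 1 else meas 'i) = meas w0 by rewrite /w0; case: par.
  move=> z xx; rewrite !Kv_nth1.
  case: (f 0%N k == 0%N); case: (f 1%N k == 0%N); rewrite ?Kv_zero_vec ?mul0r //.
  exact: F_meas.
- case: (k == d0) => /=.
  + by apply: F_lift; apply: F_lift; apply: F_meas.
  + by apply: F_lift; apply: F_meas.
Qed.

Lemma helper_prod :
  \prod_(k | (k != i) && (k != j)) bet k true = (if par then -1 else 1).
Proof.
transitivity (\prod_(k <- [seq q <- enum 'I_n | ~~ pairk q]) (if f 0%N k == 1%N then -1 else 1 : algC)).
  rewrite big_filter big_enum_cond; apply: eq_big => k.
    by rewrite /pairk negb_or.
  move=> /andP [ki kj].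
  rewrite /bet /pairk (negbTE ki) (negbTE kj) /=.
  by case: (f 0%N k == 1%N); rewrite ?rmorphN ?rmorph1.
by rewrite prod_sign /par /gm_parity /L0 foldr_map.
Qed.

Lemma psi3_zero : (f 2%N i == 1%N) = (f 2%N j == 1%N) -> forall b, qpsi (c 3) b = 0.
Proof.
move=> heq b; rewrite psi3 -/V3 /pf.
have -> : \sum_z \prod_(k < n) V3 z k (b k) =
          (\prod_(k < n) V3 false k (b k)) * \sum_z \prod_(k < n) bet k z.
  rewrite big_distrr; apply: eq_bigr => z _.
  rewrite (eq_bigr (fun k => V3 false k (b k) * bet k z)); last by move=> k _; apply: V3_fact.
  exact: prod_split.
rewrite big_bool /=.
have -> : \prod_(k < n) bet k false = 1.
  by apply: big1 => k _; rewrite /bet; case: (pairk k); rewrite /uv rmorph1.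
rewrite [\prod_(k < n) bet k true](bigD1 i) //.
rewrite [\prod_(k < n | k != i) bet k true](bigD1 j) /=; last by rewrite eq_sym.
rewrite helper_prod.
have hi : pairk i by rewrite /pairk eqxx.
have hj : pairk j by rewrite /pairk eqxx orbT.
rewrite /bet hi hj /uv -heq /w0.
case: par; case: (f 2%N i == 1%N);
  rewrite ?rmorphN ?rmorph1 ?conjCi ?mulrNN ?mulr1 ?mulrN1 ?opprK -?expr2 ?sqrCi;
  by rewrite /= ?conjCi ?opprK ?sqrrN ?sqrCi addNr !mulr0.
Qed.


Lemma term3 : terminated (qc (c 3)).
Proof. by move=> k; rewrite c3_stat. Qed.

Lemma go_pair k : pairk k -> group_output x (qc (c 3)) (gs_group i j k) = [:: f 2%N k == 1%N].
Proof.
move=> hk; rewrite /group_output; case: pickP => [p /andP [hg ho] | H].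
- have hg' : gs_group i j p == gs_group i j k by [].
  rewrite gs_group_pairk // in hg'; move/eqP: hg' => ->.
  by rewrite c3_stat hk.
- by have := H k; rewrite eqxx c3_stat hk.
Qed.

Lemma go_2 : group_output x (qc (c 3)) (@Ordinal 3 2 isT) = [::].
Proof.
rewrite /group_output; case: pickP => [p /andP [hg ho] | //].
move: ho hg; rewrite c3_stat; case hp: (pairk p) => //= _.
move: hp; rewrite /pairk /= /gs_group; case: (p == i) => //= /eqP ->.
by rewrite eqxx.
Qed.

Lemma won3 : (f 2%N i == 1%N) != (f 2%N j == 1%N) -> won x (qc (c 3)).
Proof.
move=> hne; split.
- move=> p q hg; rewrite !c3_stat; case hp: (pairk p); case hq: (pairk q) => //= _ _.
  apply/eqP; rewrite -(gs_group_pairk q p hq); apply/eqP; exact: hg.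
- have hi : pairk i by rewrite /pairk eqxx.
  have hj : pairk j by rewrite /pairk eqxx orbT.
  have g0 : gs_group i j i = @Ordinal 3 0 isT by rewrite /gs_group eqxx.
  have g1 : gs_group i j j = @Ordinal 3 1 isT by rewrite /gs_group eq_sym (negbTE nij) eqxx.
  rewrite /= /gs_allowed -g0 -g1 (go_pair i hi) (go_pair j hj) go_2.
  move: hne; case: (f 2%N i == 1%N); case: (f 2%N j == 1%N) => //= _.
  + by right.
  + by left.
Qed.

End Run.

End QB.
Import QB.

Module QC.
Import Order.TTheory GRing.Theory Num.Theory.

Section Final.
Variable n : nat.
Hypothesis h5 : (5 <= n)%N.
Let hn : (2 < n)%N. Proof. exact: leq_trans h5. Qed.

Lemma ineq (e : gidx (game_s n)) : (sval e).1 != (sval e).2.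
Proof. by case: e => [[a b]] /= h; apply/negP => /eqP E; rewrite E ltnn in h. Qed.

Lemma cost_le1 (e : gidx (game_s n)) f T :
  (qcost (qtau n) (ghz n) (ginst (game_s n) e) tt f T <= 1)%N.
Proof.
have E : forall T, qcost (qtau n) (ghz n) (ginst (game_s n) e) tt f T = (1 < T)%N.
  elim => [|T' IH]; first by rewrite /qcost big_ord0.
  rewrite /qcost big_ord_recr /= -/(qcost _ _ _ _ _ _) IH.
  rewrite (qbcast_val _ _ _ _ (ineq e) hn).
  by case: T' {IH} => [|[|T']].
by rewrite E; case: (1 < T)%N.
Qed.

Lemma qsd : qselfdelim (qtau n) (ghz n) (game_s n).
Proof.
move=> k t e1 e2 w1 w2 f1 f2 /=.
case: w1; case: w2 => _ _ _ _ _ _ _ _ _.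
rewrite (qbcast_val _ _ _ f1 (ineq e1) hn) (qbcast_val _ _ _ f2 (ineq e2) hn).
case: (t == 1%N) => //.
by rewrite prefixE /= => /eqP E; case: E => ->.
Qed.


Lemma qwin : qwins (qtau n) (ghz n) (game_s n).
Proof.
move=> e w f; case: w; exists 3%N.
have nij := ineq e.
case heq: ((f 2%N (sval e).1 == 1%N) == (f 2%N (sval e).2 == 1%N)).
- left => -[b]; apply/negP; rewrite negbK; apply/eqP.
  exact: (psi3_zero _ _ _ _ nij hn (eqP heq) b).
- right; split.
  + exact: (term3 _ _ _ _ nij hn).
  + by apply: (won3 _ _ _ _ nij hn); rewrite heq.
Qed.

Lemma quantum_bound : (Bqm (ghz n) (game_s n) <= 1%:E)%E.
Proof.
apply: ge_ereal_inf; exists (Bq (qtau n) (ghz n) (game_s n)).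
  by exists (qtau n) => //; split; [exact: qwin | exact: qsd].
apply: ge_ereal_sup => _ [e [w [f [T [_ ->]]]]].
rewrite lee_fin; case: w.
have := cost_le1 e f T.
by rewrite -(ler_nat Rdefinitions.R) => /le_trans; apply.
Qed.

End Final.

End QC.
Import QC.

Theorem lemma1 (n : nat) : (5 <= n)%N ->
  ((log2 (log2 (n%:R)))%:E <= Bcl (game_s n))%E /\
  (Bqm (ghz n) (game_s n) <= 1%:E)%E.
Proof.
move=> h5; split; [exact: classical_bound | exact: quantum_bound].
Qed.
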